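(* Algorithm 1 picks at most $(\alpha+\varepsilon)\cdot\widetilde{\mathrm{opt}}$ sets in $\mathrm{SOL}$.
   Context: Algorithm 1. Input: a stream of sets $S_1,\dots,S_m\subseteq[n]$, an integer $\alpha\ge1$, a parameter $\varepsilon>0$, and a number $\widetilde{\mathrm{opt}}$ with $\mathrm{opt}\le\widetilde{\mathrm{opt}}\le(1+\varepsilon)\mathrm{opt}$, where $\mathrm{opt}$ is the minimum number of input sets covering $[n]$. (1) Set $U\leftarrow[n]$, $\mathrm{SOL}\leftarrow\emptyset$. (2) In one pass, for each $S_i$ with $|S_i\cap U|\ge n/(\varepsilon\,\widetilde{\mathrm{opt}})$: add $i$ to $\mathrm{SOL}$ and set $U\leftarrow U\setminus S_i$. (3) For $j=1,\dots,\alpha$: (a) let $U_{\mathrm{smpl}}\subseteq U$ contain each element of $U$ independently with probability $p=16\,\widetilde{\mathrm{opt}}\log m/n^{1-1/\alpha}$; (b) in one pass, store $S'_i=S_i\cap U_{\mathrm{smpl}}$ for all $i\in[m]$; (c) compute an optimal (minimum-size) set cover $\mathrm{OPT}'$ of the instance $(S'_1,\dots,S'_m)$ on universe $U_{\mathrm{smpl}}$ and add its indices to $\mathrm{SOL}$; (d) in another pass, set $U\leftarrow U\setminus\bigcup_{i\in\mathrm{OPT}'}S_i$. (4) Return $\mathrm{SOL}$. *)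

(* Defs.v *)
From mathcomp Require Import all_boot all_order all_algebra.
Set Implicit Arguments. Unset Strict Implicit. Unset Printing Implicit Defensive.
Import Order.TTheory GRing.Theory Num.Theory.
Local Open Scope ring_scope.

Definition is_cover (n m : nat) (S : 'I_m -> {set 'I_n}) (U : {set 'I_n})
  (C : {set 'I_m}) : Prop :=
  U \subset \bigcup_(i in C) S i.

Definition is_min_cover (n m : nat) (S : 'I_m -> {set 'I_n}) (U : {set 'I_n})
  (C : {set 'I_m}) : Prop :=
  is_cover S U C /\ forall C', is_cover S U C' -> (#|C| <= #|C'|)%N.

Definition optimal_value (n m : nat) (S : 'I_m -> {set 'I_n}) (U : {set 'I_n})
  (opt : nat) : Prop :=
  exists C, is_min_cover S U C /\ #|C| = opt.

(* Step (2): one streaming pass over S_1..S_m with threshold thr, starting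
   from U = [n], SOL = empty.  State = (U, SOL). *)
Definition step2 (R : realFieldType) (n m : nat) (S : 'I_m -> {set 'I_n})
  (thr : R) : {set 'I_n} * {set 'I_m} :=
  foldl (fun st i =>
           if thr <= (#|S i :&: st.1|)%:R then (st.1 :\: S i, i |: st.2)
           else st)
        ([set: 'I_n], set0) (enum 'I_m).

(* One iteration j of step (3): U_smpl is the (random) sample, an arbitrary
   subset of U; OPT' is an optimal set cover of the instance
   (S_i :&: U_smpl)_i on universe U_smpl. *)
Definition step3_iter (n m : nat) (S : 'I_m -> {set 'I_n})
  (st st' : {set 'I_n} * {set 'I_m}) : Prop :=
  exists (Usmpl : {set 'I_n}) (OPT' : {set 'I_m}),
    [/\ Usmpl \subset st.1,
        is_min_cover (fun i => S i :&: Usmpl) Usmpl OPT',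
        st'.2 = st.2 :|: OPT' &
        st'.1 = st.1 :\: \bigcup_(i in OPT') S i].

Fixpoint step3_run (n m : nat) (S : 'I_m -> {set 'I_n}) (k : nat)
  (st st' : {set 'I_n} * {set 'I_m}) : Prop :=
  match k with
  | O => st' = st
  | k'.+1 => exists mid, step3_run S k' st mid /\ step3_iter S mid st'
  end.

(* SOL is a possible output of Algorithm 1 (over all outcomes of the
   random samples and all choices of optimal covers). *)
Definition alg1_output (R : realFieldType) (n m : nat) (S : 'I_m -> {set 'I_n})
  (alpha : nat) (eps optt : R) (SOL : {set 'I_m}) : Prop :=
  exists Ufin, step3_run S alpha (step2 S (n%:R / (eps * optt))) (Ufin, SOL).

(* Main.v *)
Require Import Defs.
From mathcomp Require Import all_boot all_order all_algebra.
From mathcomp Require Import zify ring lra.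
Import Order.TTheory GRing.Theory Num.Theory.
Local Open Scope ring_scope.

Lemma step2_inv (R : realFieldType) (n m : nat) (S : 'I_m -> {set 'I_n})
  (thr : R) (s : seq 'I_m) (st : {set 'I_n} * {set 'I_m}) :
  0 <= thr ->
  #|st.2|%:R * thr + #|st.1|%:R <= n%:R ->
  let st' := foldl (fun st i =>
           if thr <= (#|S i :&: st.1|)%:R then (st.1 :\: S i, i |: st.2)
           else st) st s in
  #|st'.2|%:R * thr + #|st'.1|%:R <= n%:R.
Proof.
move=> thr0; elim: s st => [|i s IH] st H //=.
apply: IH; case: ifP => // Hthr /=.
apply: le_trans H.
have e1 := cardsID (S i) st.1.
have e2 : (#|i |: st.2| <= #|st.2|.+1)%N.
  by rewrite cardsU1; case: (i \in st.2).
have : (#|i |: st.2|%:R <= (#|st.2|.+1)%:R :> R) by rewrite ler_nat.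
move=> Hc.
rewrite -e1 natrD in Hthr *.
rewrite -natr1 in Hc.
rewrite setIC in Hthr.
nra.
Qed.

Lemma step3_bound (n m : nat) (S : 'I_m -> {set 'I_n}) (C : {set 'I_m})
  (k : nat) st st' :
  is_cover S [set: 'I_n] C ->
  step3_run S k st st' -> (#|st'.2| <= #|st.2| + k * #|C|)%N.
Proof.
move=> HC; elim: k st' => [|k IH] st' /=.
  by move=> ->; rewrite addn0.
move=> [mid [/IH Hmid [Us [O [HUs [Hcov Hmin] -> _]]]]].
have HO : (#|O| <= #|C|)%N.
  apply: Hmin; apply/subsetP => x Hx.
  have /bigcupP [i iC xi] : x \in \bigcup_(i in C) S i.
    by apply: (subsetP HC); rewrite in_setT.
  by apply/bigcupP; exists i => //; rewrite inE xi.
rewrite cardsU.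
rewrite mulSn.
move: (#|mid.2|) (#|O|) (#|mid.2 :&: O|) (k * #|C|) (#|C|) (#|st.2|) Hmid HO => a b c d e f; lia.
Qed.

Theorem lemma3p7 (R : realFieldType) (n m : nat) (S : 'I_m -> {set 'I_n})
  (alpha : nat) (eps optt : R) (opt : nat) (SOL : {set 'I_m}) :
  (0 < n)%N -> (1 <= alpha)%N -> 0 < eps ->
  optimal_value S [set: 'I_n] opt ->
  (opt%:R <= optt) -> (optt <= (1 + eps) * opt%:R) ->
  alg1_output S alpha eps optt SOL ->
  (#|SOL|)%:R <= (alpha%:R + eps) * optt.
Proof.
move=> n0 a1 e0 [C [[HC _] Copt]] Hopt _ [Uf Hrun].
have opt1 : (1 <= opt)%N.
  rewrite -Copt card_gt0; apply/set0Pn.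
  have /bigcupP [i iC _] : Ordinal n0 \in \bigcup_(i in C) S i.
    by apply: (subsetP HC); rewrite in_setT.
  by exists i.
have optt0 : 1 <= optt.
  by apply: le_trans Hopt; rewrite ler1n.
have H3 := @step3_bound _ _ _ _ _ _ _ HC Hrun; rewrite Copt /= in H3.
set st := step2 S (n%:R / (eps * optt)) in H3.
have H2 : #|st.2|%:R * (n%:R / (eps * optt)) + #|st.1|%:R <= n%:R :> R.
  apply: step2_inv.
    by apply: divr_ge0; [exact: ler0n| apply: mulr_ge0; lra].
  by rewrite /= cards0 cardsT card_ord mul0r add0r.
have Hn : (0 : R) < n%:R by rewrite ltr0n.
have H2' : #|st.2|%:R <= eps * optt.
  have : #|st.2|%:R * (n%:R / (eps * optt)) <= n%:R :> R.
    apply: le_trans H2; rewrite lerDl; exact: ler0n.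
  have pe : 0 < eps * optt by apply: mulr_gt0 => //; lra.
  rewrite mulrA ler_pdivrMr // => h.
  by rewrite -(ler_pM2l Hn) mulrC.
have : #|SOL|%:R <= #|st.2|%:R + (alpha * opt)%:R :> R.
  by rewrite -natrD ler_nat.
rewrite natrM => h.
have : (opt%:R * alpha%:R <= optt * alpha%:R :> R).
  by apply: ler_wpM2r => //; exact: ler0n.
nra.
Qed.
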